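(* Each of $\Upsilon=\pi,\theta,\theta_B,\theta_{AB},\Psi$ satisfies the separation property on the class of all tree-child phylogenetic networks (labeled in a fixed finite set $S$) in which no pair of parents of a hybrid node is connected by a path: for any two such networks $N_1,N_2$, if $\Upsilon(N_1)=\Upsilon(N_2)$ then $N_1\cong N_2$.
   Context: A DAG $N=(V,E)$ is labeled in $S$ if its leaves (out-degree 0) are bijectively labeled by $S$; $\cong$ means isomorphism of directed graphs preserving leaf labels. A tree node has in-degree at most 1; a hybrid node has in-degree greater than 1; a tree child is a child that is a tree node. A tree-child phylogenetic network is a rooted DAG labeled in $S$ in which every non-leaf node has at least one tree child, no tree node has out-degree 1, and every hybrid node has out-degree exactly 1. ''No pair of parents of a hybrid node is connected by a path'': if $u_1,u_2$ are parents of a hybrid node, there is no path $u_1\rightsquigarrow u_2$ nor $u_2\rightsquigarrow u_1$. For a node $v$: $C(v)$ is the set of descendant leaves; $A(v)$ the set of leaves $s$ such that every path from the root to $s$ contains $v$; $B(v)=C(v)\setminus A(v)$. For an arc $e=(u,v)$: $\pi(e)=(C(v),S\setminus C(v))$; $\theta(e)=(A(v),B(v),S\setminus C(v))$; $\theta_B(e)$ is $\theta(e)$ with each $s\in B(v)$ weighted by the maximum number of hybrid nodes on a path from $v$ to $s$ (including $v$ and $s$); $\theta_{AB}(e)$ is $\theta(e)$ with each $s\in A(v)\cup B(v)$ so weighted. An arc is a tree arc if its head is a tree node and a network arc otherwise; for a hybrid node $v$, $RS(v)=\{C(u)\mid u\text{ a parent of }v\}$; $\Psi(e)=\theta_{AB}(e)$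 for a tree arc, $\Psi(e)=(\theta(e),RS(v))$ for a network arc with head $v$. For each $\Upsilon$, $\Upsilon(N)=\{\Upsilon(e)\mid e\in E\}$. *)

(* Defs.v *)
From HB Require Import structures.
From mathcomp Require Import all_boot.
From mathcomp Require Import boolp.

(* A finite directed graph (no multiple arcs) whose nodes are the finType nV,
   arcs given by nE, together with a labelling map nlab : S -> nV (intended to
   be a bijection between S and the leaves, see [labeled_in]). *)
Record network (S : finType) := Network {
  nV : finType;
  nE : rel nV;
  nlab : S -> nV }.

Arguments nV {S}.
Arguments nE {S}.
Arguments nlab {S}.
Set Implicit Arguments. Unset Strict Implicit. Unset Printing Implicit Defensive.

Section Defs.
Variable S : finType.
Variable N : network S.
Local Notation V := (nV N).
Local Notation E := (nE N).
Local Notation lab := (nlab N).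

Definition indeg (v : V) := #|[set u | E u v]|.
Definition outdeg (v : V) := #|[set w | E v w]|.
Definition is_leaf (v : V) := outdeg v == 0.
Definition is_tree_node (v : V) := indeg v <= 1.
Definition is_hybrid (v : V) := 1 < indeg v.

Definition acyclic := forall u v, E u v -> ~~ connect E v u.
Definition is_root (r : V) := indeg r == 0.
Definition rooted := exists r, is_root r /\ forall v, is_root v -> v = r.
Definition labeled_in := injective lab /\ forall v, is_leaf v <-> exists s, lab s = v.

Definition tree_child_network :=
  [/\ acyclic, rooted, labeled_in &
   [/\ (forall v, ~~ is_leaf v -> exists w, E v w && is_tree_node w),
      (forall v, is_tree_node v -> outdeg v != 1) &
      (forall v, is_hybrid v -> outdeg v = 1)]].

Definition no_parent_path :=
  forall h u1 u2, is_hybrid h -> E u1 h -> E u2 h -> u1 != u2 -> ~~ connect E u1 u2.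


Definition Cset (v : V) : {set S} := [set s | connect E v (lab s)].
Definition Aset (v : V) : {set S} :=
  [set s | `[< forall r (p : seq V), is_root r -> path E r p -> last r p = lab s ->
              v \in r :: p >] ].
Definition Bset (v : V) : {set S} := Cset v :\: Aset v.

Definition hyb_path (v w : V) (n : nat) :=
  exists p : seq V, [/\ path E v p, last v p = w & count is_hybrid (v :: p) = n].
(* maximum number of hybrid nodes on a path from v to w; in an acyclic graph
   every path visits at most #|V| nodes, so the bound n <= #|V| is no restriction *)
Definition max_hyb (v w : V) : nat :=
  \max_(n < #|V|.+1 | `[< hyb_path v w n >]) n.

(* a weighted subset of S: Some w at s in the set (weight w), None elsewhere *)
Definition weighted (v : V) (X : {set S}) : {ffun S -> option nat} :=
  [ffun s => if s \in X then Some (max_hyb v (lab s)) else None].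

Definition pi_arc (u v : V) : {set S} * {set S} := (Cset v, ~: Cset v).
Definition theta_arc (u v : V) : {set S} * {set S} * {set S} :=
  (Aset v, Bset v, ~: Cset v).
Definition thetaB_arc (u v : V) : {set S} * {ffun S -> option nat} * {set S} :=
  (Aset v, weighted v (Bset v), ~: Cset v).
Definition thetaAB_arc (u v : V)
  : {ffun S -> option nat} * {ffun S -> option nat} * {set S} :=
  (weighted v (Aset v), weighted v (Bset v), ~: Cset v).
Definition RS (v : V) : {set {set S}} := [set Cset u | u in [set u | E u v]].
Definition Psi_arc (u v : V)
  : ({ffun S -> option nat} * {ffun S -> option nat} * {set S})
    + ({set S} * {set S} * {set S} * {set {set S}}) :=
  if is_tree_node v then inl (thetaAB_arc u v) else inr (theta_arc u v, RS v).

End Defs.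

Definition net_iso (S : finType) (N1 N2 : network S) :=
  exists f : nV N1 -> nV N2,
    [/\ bijective f, (forall u v, nE N1 u v = nE N2 (f u) (f v)) &
        (forall s, f (nlab N1 s) = nlab N2 s)].

(* Upsilon(N) = { Upsilon(e) | e in E } as a predicate; x \in Upsilon(N) *)
Definition arc_image (S : finType) (T : Type)
  (Y : forall N : network S, nV N -> nV N -> T) (N : network S) (x : T) :=
  exists u v, nE N u v /\ Y N u v = x.

Definition separates (S : finType) (P : network S -> Prop) (T : Type)
  (Y : forall N : network S, nV N -> nV N -> T) :=
  forall N1 N2 : network S, P N1 -> P N2 ->
    (forall x, arc_image Y N1 x <-> arc_image Y N2 x) -> net_iso N1 N2.

Definition TCN_no_parent_path (S : finType) (N : network S) :=
  tree_child_network N /\ no_parent_path N.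

(* Main.v *)
Require Import Defs.
From mathcomp Require Import all_boot.
Set Implicit Arguments. Unset Strict Implicit. Unset Printing Implicit Defensive.

Section Graph.
Variable T : finType.
Variable e : rel T.

Lemma conn_last x y : connect e x y -> x != y -> exists q, e q y /\ connect e x q.
Proof.
move=> /connectP [p pth ->]; elim/last_ind: p pth => [|p z _] /=.
  by rewrite eqxx.
rewrite rcons_path last_rcons => /andP [pth ez] _.
exists (last x p); split => //; apply/connectP; by exists p.
Qed.

Lemma conn_first x y : connect e x y -> x != y -> exists z, e x z /\ connect e z y.
Proof.
move=> /connectP [[|z p] /= pth ->]; first by rewrite eqxx.
move: pth => /andP [exz pth] _; exists z; split => //; apply/connectP; by exists p.
Qed.

End Graph.
Section Net.
Variable S : finType.
Variable N : network S.
Local Notation V := (nV N).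
Local Notation E := (nE N).
Local Notation lab := (nlab N).
Hypothesis tcn : tree_child_network N.
Hypothesis npp : no_parent_path N.

Lemma acyc : acyclic N. Proof. by move: tcn; rewrite /tree_child_network => -[]. Qed.
Lemma labin : labeled_in N. Proof. by move: tcn; rewrite /tree_child_network => -[]. Qed.
Lemma tchild (v : V) : ~~ is_leaf v -> exists w, E v w && is_tree_node w.
Proof. by move: tcn; rewrite /tree_child_network => -[] _ _ _ [] H _ _; apply: H. Qed.
Lemma tout (v : V) : is_tree_node v -> outdeg v != 1.
Proof. by move: tcn; rewrite /tree_child_network => -[] _ _ _ [] _ H _; apply: H. Qed.
Lemma hout (v : V) : is_hybrid v -> outdeg v = 1.
Proof. by move: tcn; rewrite /tree_child_network => -[] _ _ _ [] _ _ H; apply: H. Qed.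

Lemma conn_antisym (x y : V) : connect E x y -> connect E y x -> x = y.
Proof.
move=> cxy cyx; apply/eqP; apply/negPn/negP => nxy.
have [z [exz czy]] := conn_first cxy nxy.
by move: (acyc exz); rewrite (connect_trans czy cyx).
Qed.

Lemma tree_par (v p q : V) : is_tree_node v -> E p v -> E q v -> p = q.
Proof.
rewrite /is_tree_node /indeg => /card_le1_eqP H ep eq; apply: H; by rewrite inE.
Qed.

Lemma hyb2 (v p q : V) : E p v -> E q v -> p != q -> is_hybrid v.
Proof.
move=> ep eq npq; rewrite /is_hybrid /indeg; apply/card_gt1P; exists p, q.
by rewrite !inE.
Qed.

Lemma hyb_other (v p : V) : is_hybrid v -> E p v -> exists q, E q v /\ q != p.
Proof.
rewrite /is_hybrid /indeg => /card_gt1P [x [y [xi yi nxy]]] ep.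
move: xi yi; rewrite !inE => ex ey.
case: (eqVneq x p) => [xp|nxp]; last by exists x.
by exists y; split => //; rewrite -xp eq_sym.
Qed.

Lemma hyb_child (h : V) : is_hybrid h -> exists t, [/\ E h t, is_tree_node t & forall w, E h w -> w = t].
Proof.
move=> hh; have o1 := hout hh.
have nl : ~~ is_leaf h by rewrite /is_leaf o1.
have [t /andP [ht tt]] := tchild nl.
exists t; split => // w hw.
have : #|[set w | E h w]| <= 1 by rewrite -/(outdeg h) o1.
by move/card_le1_eqP; apply; rewrite inE.
Qed.

Lemma tree_hyb (v : V) : is_tree_node v = ~~ is_hybrid v.
Proof. by rewrite /is_tree_node /is_hybrid -leqNgt. Qed.

Lemma par_hyb_tree (p h : V) : is_hybrid h -> E p h -> is_tree_node p.
Proof.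
move=> hh ph; rewrite tree_hyb; apply/negP => hp.
have [t [pt tt tu]] := hyb_child hp.
by move: tt; rewrite -(tu h ph) tree_hyb hh.
Qed.

Lemma tree_other (u v : V) : is_tree_node u -> ~~ is_leaf u -> E u v -> exists c, E u c /\ c != v.
Proof.
move=> tu nl uv; have o := tout tu.
have : 1 < outdeg u by move: nl o; rewrite /is_leaf; case: (outdeg u) => [|[]].
rewrite /outdeg => /card_gt1P [x [y [xi yi nxy]]]; move: xi yi; rewrite !inE => ex ey.
case: (eqVneq x v) => [xv|nxv]; last by exists x.
by exists y; split => //; rewrite -xv eq_sym.
Qed.

Lemma leaf_noedge (v w : V) : is_leaf v -> ~~ E v w.
Proof.
rewrite /is_leaf /outdeg => /eqP /cards0_eq H; apply/negP => vw.
have : w \in [set w | E v w] by rewrite inE.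
by rewrite H inE.
Qed.

End Net.
Section Net2.
Variable S : finType.
Variable N : network S.
Local Notation V := (nV N).
Local Notation E := (nE N).
Local Notation lab := (nlab N).
Hypothesis tcn : tree_child_network N.
Hypothesis npp : no_parent_path N.

Lemma edge_neq (x y : V) : E x y -> x != y.
Proof.
move=> exy; apply/negP => /eqP xy; move: (acyc tcn exy); by rewrite xy connect0.
Qed.

Lemma edge2_neq (x y z : V) : E x y -> E y z -> x != z.
Proof.
move=> exy eyz; apply/negP => /eqP xz; move: (acyc tcn exy).
by rewrite xz (connect1 eyz).
Qed.

Lemma sub_conn (u v : V) : connect E u v -> Cset v \subset Cset u.
Proof.
move=> cuv; apply/subsetP => s; rewrite !inE => cv; exact: connect_trans cuv cv.
Qed.

Lemma leaf_lab (s : S) : is_leaf (lab s).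
Proof. by case: (labin tcn) => _ H; apply/H; exists s. Qed.

Lemma C_leaf (s : S) : Cset (lab s) = [set s].
Proof.
apply/setP => s'; rewrite !inE; apply/idP/idP => [c|/eqP->]; last exact: connect0.
case: (eqVneq (lab s) (lab s')) => [e|ne].
  by case: (labin tcn) => inj _; rewrite (inj _ _ e).
have [z [ez _]] := conn_first c ne.
by move: (@leaf_noedge _ _ (lab s) z (leaf_lab s)); rewrite ez.
Qed.

Lemma leaf_tree (s : S) : is_hybrid (lab s) = false.
Proof.
apply/negP => h; move: (hout tcn h) (leaf_lab s); rewrite /is_leaf => ->. done.
Qed.

Lemma C_hyb (h t : V) : is_hybrid h -> E h t -> Cset h = Cset t.
Proof.
move=> hh ht; apply/eqP; rewrite eqEsubset; apply/andP; split; last by apply: sub_conn; apply: connect1.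
have [t' [ht' _ tu]] := hyb_child tcn hh.
apply/subsetP => s; rewrite !inE => c.
case: (eqVneq h (lab s)) => [e|ne].
  by move: (hout tcn hh) (leaf_lab s); rewrite -e /is_leaf => ->.
have [z [ez cz]] := conn_first c ne.
by rewrite (tu _ ht) -(tu _ ez).
Qed.

Lemma own_leaf (v : V) : exists s, connect E v (lab s) /\
  forall w, connect E w (lab s) -> connect E w v || connect E v w.
Proof.
have: forall n (v : V), #|[set x | connect E v x]| <= n -> exists s, connect E v (lab s) /\
  forall w, connect E w (lab s) -> connect E w v || connect E v w; last by apply; exact: leqnn.
elim=> [|n IH] {}v hv.
  have : 0 < #|[set x | connect E v x]| by apply/card_gt0P; exists v; rewrite inE connect0.
  by rewrite ltnNge hv.
case: (boolP (is_leaf v)) => lv.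
  case: (labin tcn) => _ /(_ v) [/(_ lv) [s ls] _].
  by exists s; rewrite ls connect0; split => // w ->.
have [t /andP [vt tt]] := tchild tcn lv.
have [|s [cts H]] := IH t.
  have : [set x | connect E t x] \proper [set x | connect E v x].
    apply/properP; split.
      by apply/subsetP => x; rewrite !inE; apply: connect_trans; apply: connect1.
    by exists v; rewrite !inE ?connect0 //; exact: (acyc tcn vt).
  by rewrite properEcard => /andP [_ lt]; rewrite -ltnS; exact: leq_trans lt hv.
exists s; split; first by apply: connect_trans (connect1 vt) cts.
move=> w cw; case/orP: (H w cw) => [cwt|ctw].
  case: (eqVneq w t) => [->|nwt]; first by rewrite (connect1 vt) orbT.
  have [q [eq cwq]] := conn_last cwt nwt.
  by rewrite -(tree_par tt eq vt) cwq.
by rewrite (connect_trans (connect1 vt) ctw) orbT.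
Qed.

Lemma strict1 (u v : V) : is_tree_node u -> ~~ is_leaf u -> E u v -> Cset v \proper Cset u.
Proof.
move=> tu nl uv; have [c [uc ncv]] := tree_other tcn tu nl uv.
have [s [cs H]] := own_leaf c.
apply/properP; split; first by apply: sub_conn; apply: connect1.
exists s; first by rewrite inE (connect_trans (connect1 uc) cs).
rewrite inE; apply/negP => cvs; case/orP: (H v cvs) => [cvc|ccv].
  have nvc : v != c by rewrite eq_sym.
  have [q [eqc cvq]] := conn_last cvc nvc.
  case: (eqVneq q u) => [qu|nqu].
    by move: (acyc tcn uv); rewrite -qu cvq.
  have hc := hyb2 eqc uc nqu.
  have nuq : u != q by rewrite eq_sym.
  by move: (npp hc uc eqc nuq); rewrite (connect_trans (connect1 uv) cvq).
have [q [eqv ccq]] := conn_last ccv ncv.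
case: (eqVneq q u) => [qu|nqu].
  by move: (acyc tcn uc); rewrite -qu ccq.
have hv := hyb2 eqv uv nqu.
have nuq : u != q by rewrite eq_sym.
by move: (npp hv uv eqv nuq); rewrite (connect_trans (connect1 uc) ccq).
Qed.

End Net2.
Definition cov (S : finType) (K : {set {set S}}) (X Y : {set S}) : bool :=
  [&& Y \in K, X \proper Y & [forall Z, (Z \in K) ==> ~~ ((X \proper Z) && (Z \proper Y))]].
Definition twoc (S : finType) (K : {set {set S}}) (X : {set S}) : bool :=
  [exists Y1, exists Y2, [&& cov K X Y1, cov K X Y2 & Y1 != Y2]].
Definition Kset (S : finType) (N : network S) : {set {set S}} := [set Cset v | v : nV N].

Lemma sub_nproper (T : finType) (A B : {set T}) : A \subset B -> ~~ (A \proper B) -> A = B.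
Proof. by move=> sAB nAB; apply/eqP; rewrite eqEproper sAB. Qed.

Lemma proper_nsub (T : finType) (A B : {set T}) : A \proper B -> B \subset A -> False.
Proof. by rewrite properE => /andP [_ /negP]. Qed.

Section Net3.
Variable S : finType.
Variable N : network S.
Local Notation V := (nV N).
Local Notation E := (nE N).
Local Notation lab := (nlab N).
Local Notation K := (Kset N).
Hypothesis tcn : tree_child_network N.
Hypothesis npp : no_parent_path N.

Lemma nonleaf (u v : V) : E u v -> ~~ is_leaf u.
Proof. by move=> uv; apply/negP => lu; move: (leaf_noedge v lu); rewrite uv. Qed.

Lemma strict (u v : V) : is_tree_node u -> connect E u v -> u != v -> Cset v \proper Cset u.
Proof.
move=> tu cuv nuv; have [q [eqv cuq]] := conn_last cuv nuv.
case: (boolP (is_hybrid q)) => hq.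
  have nuq : u != q by apply/negP => /eqP uq; move: tu; rewrite uq tree_hyb hq.
  have [p [epq cup]] := conn_last cuq nuq.
  have tp := par_hyb_tree tcn hq epq.
  apply: sub_proper_trans (sub_conn (connect1 eqv)) _.
  apply: proper_sub_trans (strict1 tcn npp tp (nonleaf epq) epq) _.
  exact: sub_conn.
have tq : is_tree_node q by rewrite tree_hyb hq.
apply: proper_sub_trans (strict1 tcn npp tq (nonleaf eqv) eqv) _.
exact: sub_conn.
Qed.

Lemma comparable (u w : V) : Cset u \subset Cset w -> connect E w u || connect E u w.
Proof.
move=> sub; have [s [cs H]] := own_leaf tcn u.
apply: H; have : s \in Cset w by apply: (subsetP sub); rewrite inE.
by rewrite inE.
Qed.

Lemma tree_inj {u v : V} : is_tree_node u -> is_tree_node v -> Cset u = Cset v -> u = v.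
Proof.
move=> tu tv e; case: (eqVneq u v) => // nuv.
have suv : Cset u \subset Cset v by rewrite e subxx.
case/orP: (comparable suv) => [cvu|cuv].
- have nvu : v != u by rewrite eq_sym.
  by have := strict tv cvu nvu; rewrite e properE subxx.
- by have := strict tu cuv nuv; rewrite e properE subxx.
Qed.

Lemma tree_cl (v : V) : exists t : V, is_tree_node t /\ Cset t = Cset v.
Proof.
case: (boolP (is_hybrid v)) => hv; last by exists v; rewrite tree_hyb hv.
have [t [vt tt _]] := hyb_child tcn hv.
by exists t; rewrite (C_hyb tcn hv vt).
Qed.

Lemma hyb_inj {u v : V} : is_hybrid u -> is_hybrid v -> Cset u = Cset v -> u = v.
Proof.
move=> hu hv e.
have [t [ut tt _]] := hyb_child tcn hu.
have [t' [vt tt' _]] := hyb_child tcn hv.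
have tt'e : t = t' by apply: tree_inj => //; rewrite -(C_hyb tcn hu ut) -(C_hyb tcn hv vt).
by apply: (tree_par tt ut); rewrite tt'e.
Qed.

Definition PP (v p : V) := (E p v /\ is_tree_node p) \/ (exists h, [/\ E h v, is_hybrid h & E p h]).

Lemma in_K (v : V) : Cset v \in K.
Proof. by apply/imsetP; exists v. Qed.

Lemma K_tree (X : {set S}) : X \in K -> exists t : V, is_tree_node t /\ Cset t = X.
Proof. by case/imsetP => v _ ->; apply: tree_cl. Qed.

Lemma cov_char {v : V} {Y : {set S}} : is_tree_node v ->
  cov K (Cset v) Y <-> exists p, PP v p /\ Y = Cset p.
Proof.
move=> tv; split.
  case/and3P => /K_tree [w [tw <-]] pvw /forallP cv.
  have: connect E w v.
    case/orP: (comparable (proper_sub pvw)) => // cvw.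
    by case: (proper_nsub pvw (sub_conn cvw)).
  move=> cwv; have nwv : w != v by apply/negP => /eqP e; move: pvw; rewrite e properE subxx.
  have [q [eqv cwq]] := conn_last cwv nwv.
  case: (boolP (is_hybrid q)) => hq.
    have nwq : w != q by apply/negP => /eqP e; move: tw; rewrite e tree_hyb hq.
    have [p [epq cwp]] := conn_last cwq nwq.
    have tp := par_hyb_tree tcn hq epq.
    exists p; split; first by right; exists q.
    apply: esym; apply: sub_nproper (sub_conn cwp) _.
    move: (cv (Cset p)); rewrite in_K /= => /negP H; apply/negP => pp; apply: H.
    rewrite pp andbT; apply: sub_proper_trans (sub_conn (connect1 eqv)) _.
    exact: (strict1 tcn npp tp (nonleaf epq) epq).
  have tq : is_tree_node q by rewrite tree_hyb hq.
  exists q; split; first by left.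
  apply: esym; apply: sub_nproper (sub_conn cwq) _.
  move: (cv (Cset q)); rewrite in_K /= => /negP H; apply/negP => pp; apply: H.
  by rewrite pp andbT; exact: (strict1 tcn npp tq (nonleaf eqv) eqv).
case=> p [PPp ->].
have [tp cpv npv] : [/\ is_tree_node p, connect E p v & p != v].
  case: PPp => [[epv tp]|[h [ehv hh eph]]].
    by split => //; [apply: connect1 | exact: (edge_neq tcn epv)].
  split; [exact: (par_hyb_tree tcn hh eph) | | exact: (edge2_neq tcn eph ehv)].
  exact: connect_trans (connect1 eph) (connect1 ehv).
apply/and3P; split; [exact: in_K | exact: strict |].
apply/forallP => Z; apply/implyP => /K_tree [w [tw <-]]; apply/negP => /andP [pvw pwp].
have: connect E w v.
  case/orP: (comparable (proper_sub pvw)) => // cvw.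
  by case: (proper_nsub pvw (sub_conn cvw)).
move=> cwv; have nwv : w != v by apply/negP => /eqP e; move: pvw; rewrite e properE subxx.
have [q [eqv cwq]] := conn_last cwv nwv.
case: PPp => [[epv _]|[h [ehv hh eph]]].
  by move: cwq; rewrite (tree_par tv eqv epv) => /sub_conn; apply: proper_nsub.
move: cwq; rewrite (tree_par tv eqv ehv) => cwh.
have nwh : w != h by apply/negP => /eqP e; move: tw; rewrite e tree_hyb hh.
have [p' [ep'h cwp']] := conn_last cwh nwh.
case: (eqVneq p' p) => [e|np'p].
  by move: cwp'; rewrite e => /sub_conn; apply: proper_nsub.
have sp'p : Cset p' \subset Cset p.
  by apply: subset_trans (sub_conn cwp') (proper_sub pwp).
case/orP: (comparable sp'p) => c.
  have npp' : p != p' by rewrite eq_sym.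
  by move: (npp hh eph ep'h npp'); rewrite c.
by move: (npp hh ep'h eph np'p); rewrite c.
Qed.

End Net3.
Definition Rel (S : finType) (K : {set {set S}}) (x y : {set S} * bool) : bool :=
  match x.2, y.2 with
  | false, false => cov K y.1 x.1 && ~~ twoc K y.1
  | false, true => cov K y.1 x.1 && twoc K y.1
  | true, false => (x.1 == y.1) && twoc K y.1
  | true, true => false
  end.

Definition key (S : finType) (N : network S) (v : nV N) := (Cset v, is_hybrid v).

Section Net4.
Variable S : finType.
Variable N : network S.
Local Notation V := (nV N).
Local Notation E := (nE N).
Local Notation lab := (nlab N).
Local Notation K := (Kset N).
Hypothesis tcn : tree_child_network N.
Hypothesis npp : no_parent_path N.

Lemma twoc_char {v : V} : is_tree_node v ->
  twoc K (Cset v) <-> exists h : V, E h v /\ is_hybrid h.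
Proof.
move=> tv; split.
  case/existsP => Y1 /existsP [Y2 /and3P [c1 c2 n12]].
  have [p1 [P1 e1]] := (cov_char tcn npp tv).1 c1.
  have [p2 [P2 e2]] := (cov_char tcn npp tv).1 c2.
  case: P1 => [[ep1 _]|[h [? ? _]]]; last by exists h.
  case: P2 => [[ep2 _]|[h [? ? _]]]; last by exists h.
  by move: n12; rewrite e1 e2 (tree_par tv ep1 ep2) eqxx.
case=> h [ehv hh].
move: (hh); rewrite /is_hybrid /indeg => /card_gt1P [p1 [p2 [i1 i2 n12]]].
move: i1 i2; rewrite !inE => e1 e2.
apply/existsP; exists (Cset p1); apply/existsP; exists (Cset p2).
apply/and3P; split.
- by apply/(cov_char tcn npp tv); exists p1; split => //; right; exists h.
- by apply/(cov_char tcn npp tv); exists p2; split => //; right; exists h.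
- apply/negP => /eqP e; move: n12; rewrite (tree_inj tcn npp (par_hyb_tree tcn hh e1)
     (par_hyb_tree tcn hh e2) e) eqxx //.
Qed.

Lemma edge_rel (u v : V) : E u v = Rel K (key u) (key v).
Proof.
rewrite /Rel /key /=.
case: (boolP (is_hybrid u)) => hu; case: (boolP (is_hybrid v)) => hv.
- apply/negP => uv; have [t [ut tt tu]] := hyb_child tcn hu.
  by move: tt; rewrite -(tu _ uv) tree_hyb hv.
- have tv : is_tree_node v by rewrite tree_hyb hv.
  apply/idP/idP => [uv|/andP [/eqP e /(twoc_char tv) [h [hv' hh]]]].
    rewrite (C_hyb tcn hu uv) eqxx /=; apply/(twoc_char tv); by exists u.
  have -> : u = h by apply: (hyb_inj tcn npp hu hh); rewrite e (C_hyb tcn hh hv').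
  done.
- have tu : is_tree_node u by rewrite tree_hyb hu.
  have [t [vt tt tuniq]] := hyb_child tcn hv.
  rewrite (C_hyb tcn hv vt).
  apply/idP/idP => [uv|/andP [c tw]].
    apply/andP; split.
      by apply/(cov_char tcn npp tt); exists u; split => //; right; exists v.
    by apply/(twoc_char tt); exists v.
  have [p [P ep]] := (cov_char tcn npp tt).1 c.
  case: P => [[ept tp]|[h [eht hh eph]]].
    by move: tp; rewrite (tree_par tt ept vt) tree_hyb hv.
  move: eph; rewrite (tree_par tt eht vt) => epv.
  by rewrite (tree_inj tcn npp tu (par_hyb_tree tcn hv epv) ep).
- have tu : is_tree_node u by rewrite tree_hyb hu.
  have tv : is_tree_node v by rewrite tree_hyb hv.
  apply/idP/idP => [uv|/andP [c ntw]].
    apply/andP; split.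
      by apply/(cov_char tcn npp tv); exists u; split => //; left.
    apply/negP => /(twoc_char tv) [h [ehv hh]].
    by move: hh; rewrite (tree_par tv ehv uv) (negbTE hu).
  have [p [P ep]] := (cov_char tcn npp tv).1 c.
  case: P => [[epv tp]|[h [ehv hh _]]].
    by rewrite (tree_inj tcn npp tu tp ep).
  by case/negP: ntw; apply/(twoc_char tv); exists h.
Qed.

Lemma key_inj (u v : V) : key u = key v -> u = v.
Proof.
case=> e eh; case: (boolP (is_hybrid u)) => hu.
  by apply: (hyb_inj tcn npp hu _ e); rewrite -eh.
apply: (tree_inj tcn npp _ _ e); rewrite tree_hyb; [exact: hu | rewrite -eh; exact: hu].
Qed.

Lemma key_img (X : {set S}) (b : bool) :
  (exists v : V, key v = (X, b)) <-> (X \in K) && (b ==> twoc K X).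
Proof.
split.
  case=> v [<- <-]; rewrite in_K /=; apply/implyP => hv.
  have [t [vt tt _]] := hyb_child tcn hv.
  by rewrite (C_hyb tcn hv vt); apply/(twoc_char tt); exists v.
case/andP => /(K_tree tcn) [t [tt <-]]; case: b => /= tw.
  have [h [ht hh]] := (twoc_char tt).1 tw.
  by exists h; rewrite /key (C_hyb tcn hh ht) hh.
by exists t; move: tt; rewrite /key tree_hyb => /negbTE ->.
Qed.

Lemma key_lab (s : S) : key (lab s) = ([set s], false).
Proof. by rewrite /key C_leaf // leaf_tree. Qed.

End Net4.
Definition Karc (S : finType) (N : network S) : {set {set S}} :=
  [set Cset v | v in [set v | [exists u, nE N u v]]].

Lemma Karc_iff (S : finType) (N : network S) (X : {set S}) :
  X \in Karc N <-> exists u v, nE N u v /\ Cset v = X.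
Proof.
split.
  by case/imsetP => v; rewrite inE => /existsP [u e] ->; exists u, v.
by case=> u [v [e <-]]; apply/imsetP; exists v => //; rewrite inE; apply/existsP; exists u.
Qed.

Section Net5.
Variable S : finType.
Variable N : network S.
Local Notation V := (nV N).
Local Notation E := (nE N).
Hypothesis tcn : tree_child_network N.

Lemma rootd : rooted N. Proof. by move: tcn; rewrite /tree_child_network => -[]. Qed.

Lemma reach_root (v : V) : exists r, is_root r /\ connect E r v.
Proof.
have: forall n (v : V), #|[set x | connect E x v]| <= n -> exists r, is_root r /\ connect E r v;
  last by apply; exact: leqnn.
elim=> [|n IH] {}v hv.
  have : 0 < #|[set x | connect E x v]| by apply/card_gt0P; exists v; rewrite inE connect0.
  by rewrite ltnNge hv.
case: (boolP (is_root v)) => rv; first by exists v; rewrite connect0.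
have : [set u | E u v] != set0 by rewrite -cards_eq0.
case/set0Pn => u; rewrite inE => uv.
have [|r [rr cru]] := IH u.
  have : [set x | connect E x u] \proper [set x | connect E x v].
    apply/properP; split.
      by apply/subsetP => x; rewrite !inE => cxu; apply: connect_trans cxu (connect1 uv).
    by exists v; rewrite !inE ?connect0 //; exact: (acyc tcn uv).
  by rewrite properEcard => /andP [_ lt]; rewrite -ltnS; exact: leq_trans lt hv.
by exists r; split => //; apply: connect_trans cru (connect1 uv).
Qed.

Lemma root_all (r : V) : is_root r -> Cset r = setT.
Proof.
move=> rr; apply/setP => s; rewrite !inE.
have [r' [rr' c]] := reach_root (nlab N s).
case: rootd => r0 [_ u]; by rewrite (u _ rr) -(u _ rr').
Qed.

Lemma K_arc : Kset N = setT |: Karc N.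
Proof.
apply/setP => X; rewrite !inE; apply/idP/idP.
  case/imsetP => v _ ->.
  case: (boolP (is_root v)) => rv; first by rewrite root_all ?eqxx.
  apply/orP; right; apply/Karc_iff.
  have : [set u | E u v] != set0 by rewrite -cards_eq0.
  case/set0Pn => u; rewrite inE => uv; by exists u, v.
case/orP => [/eqP ->|/Karc_iff [u [v [_ <-]]]]; last exact: in_K.
case: rootd => r [rr _]; rewrite -(root_all rr); exact: in_K.
Qed.

End Net5.

Lemma sep_gen (S : finType) (T : Type) (Y : forall N : network S, nV N -> nV N -> T)
  (g : T -> {set S}) :
  (forall (N : network S) (u v : nV N), g (Y N u v) = ~: Cset v) ->
  separates (@TCN_no_parent_path S) Y.
Proof.
move=> hg N1 N2 [t1 n1] [t2 n2] H.
have eK : Kset N1 = Kset N2.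
  rewrite (K_arc t1) (K_arc t2); congr (_ |: _); apply/setP => X.
  apply/idP/idP => /Karc_iff [u [v [e <-]]]; apply/Karc_iff.
    have [u' [v' [e' eY]]] := (H (Y N1 u v)).1 (ex_intro _ u (ex_intro _ v (conj e erefl))).
    exists u', v'; split => //.
    by have := congr1 (fun x => ~: g x) eY; rewrite !hg !setCK.
  have [u' [v' [e' eY]]] := (H (Y N2 u v)).2 (ex_intro _ u (ex_intro _ v (conj e erefl))).
  exists u', v'; split => //.
  by have := congr1 (fun x => ~: g x) eY; rewrite !hg !setCK.
have f_ex : forall u : nV N1, exists v : nV N2, key v == key u.
  move=> u; have [v e] : exists v : nV N2, key v = key u.
    apply/(key_img t2 n2); rewrite -eK; apply/(key_img t1 n1); by exists u.
  by exists v; rewrite e.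
have g_ex : forall u : nV N2, exists v : nV N1, key v == key u.
  move=> u; have [v e] : exists v : nV N1, key v = key u.
    apply/(key_img t1 n1); rewrite eK; apply/(key_img t2 n2); by exists u.
  by exists v; rewrite e.
exists (fun u => xchoose (f_ex u)); split.
- exists (fun v => xchoose (g_ex v)) => x.
    by apply: (key_inj t1 n1); rewrite (eqP (xchooseP (g_ex _))) (eqP (xchooseP (f_ex _))).
  by apply: (key_inj t2 n2); rewrite (eqP (xchooseP (f_ex _))) (eqP (xchooseP (g_ex _))).
- by move=> u v; rewrite (edge_rel t1 n1) (edge_rel t2 n2) !(eqP (xchooseP (f_ex _))) eK.
- by move=> s; apply: (key_inj t2 n2); rewrite (eqP (xchooseP (f_ex _))) !key_lab.
Qed.

Unset Implicit Arguments.

Theorem corollary9 (S : finType) :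
  [/\ separates (@TCN_no_parent_path S) (@pi_arc S),
      separates (@TCN_no_parent_path S) (@theta_arc S),
      separates (@TCN_no_parent_path S) (@thetaB_arc S),
      separates (@TCN_no_parent_path S) (@thetaAB_arc S) &
      separates (@TCN_no_parent_path S) (@Psi_arc S)].
Proof.
split.
- by apply: (@sep_gen _ _ _ (fun x => x.2)).
- by apply: (@sep_gen _ _ _ (fun x => x.2)).
- by apply: (@sep_gen _ _ _ (fun x => x.2)).
- by apply: (@sep_gen _ _ _ (fun x => x.2)).
- apply: (@sep_gen _ _ _ (fun x => match x with inl y => y.2 | inr y => y.1.2 end)).
  by move=> N u v; rewrite /Psi_arc; case: ifP.
Qed.
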